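(* Let $\alpha,\beta>0$ and set $a=\frac{1}{1+\alpha}$, $\theta=\frac{\beta}{1+\alpha}$. For every $n\ge1$, the random partition of $\{1,\dots,n\}$ produced at time $n$ by the Chinese restaurant process with parameters $a$ and $\theta$ has the same distribution as the partition of $\{1,\dots,n\}$ into the label sets of the branches (subtrees rooted at the children of the root) of the random tree with $n+1$ nodes produced by the growth process of the family $\mathcal{T}_{\alpha,\beta}$.
   Context: Chinese restaurant process with parameters $0<a<1$, $\theta>-a$: at time $1$ the partition is $\{\{1\}\}$. Given a partition of $\{1,\dots,n\}$ with $k$ blocks $t_1,\dots,t_k$, element $n+1$ is added to block $t_i$ with probability $\frac{|t_i|-a}{n+\theta}$, and forms a new singleton block with probability $\frac{\theta+ka}{n+\theta}$. Growth process of $\mathcal{T}_{\alpha,\beta}$ (generalized plane recursive trees with root weight $(1-t)^{-\beta}$ and non-root weight $(1-t)^{-\alpha}$): start with a single root labelled $0$; at step $n+1$ ($n\ge0$), when the current tree has nodes $0,1,\dots,n$, the new node labelled $n+1$ is attached as a child to a non-root node $v$ with probability $\frac{d(v)+\alpha}{\beta+(\alpha+1)n}$ and to the root with probability $\frac{d(\mathrm{root})+\beta}{\beta+(\alpha+1)n}$, where $d(v)$ is the current outdegree of $v$. *)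

(* Defs.v *)
From HB Require Import structures.
From mathcomp Require Import all_boot all_order all_algebra.
Set Implicit Arguments. Unset Strict Implicit. Unset Printing Implicit Defensive.
Import Order.TTheory GRing.Theory Num.Theory.
Local Open Scope ring_scope.

(* A finite discrete (sub)distribution is a list of weighted outcomes;
   the probability of an event is the total weight of the outcomes in it. *)
Definition wprob (R : realFieldType) (S : Type) (D : seq (R * S)) (E : S -> bool) : R :=
  \sum_(x <- D) (if E x.2 then x.1 else 0).

(* ---------- Chinese restaurant process ----------
   State at time m: the list of blocks (in order of creation) of a partition
   of {1,...,m}; each block is a list of its elements. *)
Section CRP.
Variables (R : realFieldType) (a th : R).

Definition crp_step (m : nat) (x : R * seq (seq nat)) : seq (R * seq (seq nat)) :=
  let: (w, s) := x in
  rcons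
    [seq (w * (((size (nth [::] s i))%:R - a) / (m%:R + th)),
          set_nth [::] s i (rcons (nth [::] s i) m.+1)) | i <- iota 0 (size s)]
    (w * ((th + (size s)%:R * a) / (m%:R + th)), rcons s [:: m.+1]).

(* distribution of the state at time m (meaningful for m >= 1) *)
Fixpoint crp_dist (m : nat) : seq (R * seq (seq nat)) :=
  match m with
  | 0 => [:: (1, [::])]
  | m'.+1 => if m' is 0 then [:: (1, [:: [:: 1%N]])]
             else flatten [seq crp_step m' x | x <- crp_dist m']
  end.
End CRP.

Definition crp_blk (s : seq (seq nat)) (x : nat) : nat := find (fun b => x \in b) s.

(* the set partition of {1,...,n} (element k+1 encoded as k : 'I_n) *)
Definition crp_part (n : nat) (s : seq (seq nat)) : {set {set 'I_n}} :=
  [set [set i : 'I_n | crp_blk s i.+1 == crp_blk s j.+1] | j : 'I_n].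

(* ---------- growth process of T_{alpha,beta} ----------
   A tree with nodes 0 (root), 1, ..., m is encoded by its parent list
   par, where the parent of node j >= 1 is nth 0 par j.-1. *)
Section Tree.
Variables (R : realFieldType) (alpha beta : R).

Definition outdeg (par : seq nat) (v : nat) : nat := count_mem v par.

Definition node_weight (par : seq nat) (v : nat) : R :=
  if v == 0%N then (outdeg par v)%:R + beta else (outdeg par v)%:R + alpha.

Definition tree_step (m : nat) (x : R * seq nat) : seq (R * seq nat) :=
  let: (w, par) := x in
  [seq (w * (node_weight par v / (beta + (alpha + 1) * m%:R)), rcons par v)
  | v <- iota 0 m.+1].

Fixpoint tree_dist (m : nat) : seq (R * seq nat) :=
  match m with
  | 0 => [:: (1, [::])]
  | m'.+1 => flatten [seq tree_step m' x | x <- tree_dist m']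
  end.
End Tree.

Fixpoint top_anc (fuel : nat) (par : seq nat) (j : nat) : nat :=
  match fuel with
  | 0 => j
  | f.+1 => let p := nth 0%N par j.-1 in
            if p == 0%N then j else top_anc f par p
  end.

Definition branch_of (par : seq nat) (j : nat) : nat := top_anc j par j.

Definition tree_part (n : nat) (par : seq nat) : {set {set 'I_n}} :=
  [set [set i : 'I_n | branch_of par i.+1 == branch_of par j.+1] | j : 'I_n].

(* Main.v *)
Require Import Defs.
From HB Require Import structures.
From mathcomp Require Import all_boot all_order all_algebra.
From mathcomp Require Import ring lra zify.
Import Order.TTheory GRing.Theory Num.Theory.
Local Open Scope ring_scope.

Set Implicit Arguments. Unset Strict Implicit.

Lemma wprob_flatten (R : realFieldType) (S : Type) (D : seq (R * seq (R * S))) E :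
  wprob (flatten (map snd D)) E = \sum_(x <- D) wprob x.2 E.
Proof. by rewrite /wprob big_flatten /= big_map. Qed.

Lemma wprob_flatten_map (R : realFieldType) (S S' : Type) (f : S' -> seq (R * S)) D E :
  wprob (flatten (map f D)) E = \sum_(x <- D) wprob (f x) E.
Proof. by rewrite /wprob big_flatten /= big_map. Qed.

Lemma wprob_map (R : realFieldType) (S S' : Type) (f : S' -> R * S) D E :
  wprob (map f D) E = \sum_(x <- D) (if E (f x).2 then (f x).1 else 0).
Proof. by rewrite /wprob big_map. Qed.

Lemma wprob_rcons (R : realFieldType) (S : Type) (D : seq (R * S)) x E :
  wprob (rcons D x) E = wprob D E + (if E x.2 then x.1 else 0).
Proof. by rewrite /wprob -cats1 big_cat big_seq1. Qed.

Lemma sum_push (R : realFieldType) (S T : eqType) (D : seq (R * S)) (g : S -> T)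
  (f : T -> R) (U : seq T) :
  uniq U -> {in D, forall x, g x.2 \in U} ->
  \sum_(x <- D) x.1 * f (g x.2) = \sum_(c <- U) wprob D (fun s => g s == c) * f c.
Proof.
move=> uU HU.
rewrite /wprob; symmetry.
under eq_bigr do rewrite mulr_suml.
rewrite exchange_big /=.
apply: eq_big_seq => x xD.
under eq_bigr do rewrite (fun_if (fun y => y * f _)) mul0r.
rewrite (bigD1_seq (g x.2)) //= ?HU // eqxx big1 ?addr0 // => c /negbTE.
by rewrite eq_sym => ->.
Qed.

Lemma chain_eq (R : realFieldType) (S1 S2 T : eqType)
  (D1 : nat -> seq (R * S1)) (D2 : nat -> seq (R * S2))
  (st1 : nat -> R * S1 -> seq (R * S1)) (st2 : nat -> R * S2 -> seq (R * S2))
  (g1 : nat -> S1 -> T) (g2 : nat -> S2 -> T) (K : nat -> T -> seq (R * T)) :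
  (forall n, (0 < n)%N -> D1 n.+1 = flatten (map (st1 n) (D1 n))) ->
  (forall n, (0 < n)%N -> D2 n.+1 = flatten (map (st2 n) (D2 n))) ->
  (forall n x, (0 < n)%N -> x \in D1 n -> forall c,
     wprob (st1 n x) (fun y => g1 n.+1 y == c) = x.1 * wprob (K n (g1 n x.2)) (fun y => y == c)) ->
  (forall n x, (0 < n)%N -> x \in D2 n -> forall c,
     wprob (st2 n x) (fun y => g2 n.+1 y == c) = x.1 * wprob (K n (g2 n x.2)) (fun y => y == c)) ->
  (forall c, wprob (D1 1%N) (fun y => g1 1%N y == c) = wprob (D2 1%N) (fun y => g2 1%N y == c)) ->
  forall n, (0 < n)%N -> forall c,
    wprob (D1 n) (fun y => g1 n y == c) = wprob (D2 n) (fun y => g2 n y == c).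
Proof.
move=> E1 E2 C1 C2 B; elim=> // n IH _.
case: n IH => [_|n IH]; first exact: B.
move=> c; rewrite E1 // E2 // !wprob_flatten_map.
rewrite (eq_big_seq (fun x => x.1 * wprob (K n.+1 (g1 n.+1 x.2)) (fun y => y == c))); last first.
  by move=> x xD; rewrite C1.
rewrite [RHS](eq_big_seq (fun x => x.1 * wprob (K n.+1 (g2 n.+1 x.2)) (fun y => y == c))); last first.
  by move=> x xD; rewrite C2.
set U := undup ([seq g1 n.+1 x.2 | x <- D1 n.+1] ++ [seq g2 n.+1 x.2 | x <- D2 n.+1]).
have uU : uniq U by rewrite undup_uniq.
rewrite (@sum_push _ _ _ _ (g1 n.+1) (fun c0 => wprob (K n.+1 c0) (fun y => y == c)) _ uU); last first.
  by move=> x xD; rewrite mem_undup mem_cat map_f.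
rewrite (@sum_push _ _ _ _ (g2 n.+1) (fun c0 => wprob (K n.+1 c0) (fun y => y == c)) _ uU); last first.
  by move=> x xD; rewrite mem_undup mem_cat (map_f (fun x => g2 n.+1 x.2)) ?orbT.
by apply: eq_bigr => c0 _; rewrite IH.
Qed.

Lemma push_pred (R : realFieldType) (S1 S2 T : eqType)
  (D1 : seq (R * S1)) (D2 : seq (R * S2)) (g1 : S1 -> T) (g2 : S2 -> T) :
  (forall c, wprob D1 (fun y => g1 y == c) = wprob D2 (fun y => g2 y == c)) ->
  forall E : pred T, wprob D1 (fun y => E (g1 y)) = wprob D2 (fun y => E (g2 y)).
Proof.
move=> H E.
set U := undup ([seq g1 x.2 | x <- D1] ++ [seq g2 x.2 | x <- D2]).
have uU : uniq U by rewrite undup_uniq.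
have e1 : forall (S : Type) (D : seq (R * S)) (g : S -> T),
  wprob D (fun y => E (g y)) = \sum_(x <- D) x.1 * (fun c => if E c then 1 else 0) (g x.2).
  by move=> S D g; rewrite /wprob; apply: eq_bigr => x _; case: ifP; rewrite ?mulr1 ?mulr0.
rewrite !e1.
rewrite (@sum_push _ _ _ _ g1 (fun c => if E c then 1 else 0) _ uU); last first.
  by move=> x xD; rewrite mem_undup mem_cat map_f.
rewrite (@sum_push _ _ _ _ g2 (fun c => if E c then 1 else 0) _ uU); last first.
  by move=> x xD; rewrite mem_undup mem_cat (map_f (fun x => g2 x.2)) ?orbT.
by apply: eq_bigr => c _; rewrite H.
Qed.

Definition kern (R : realFieldType) (a th : R) (n : nat) (c : seq nat * seq nat)
  : seq (R * (seq nat * seq nat)) :=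
  let: (sz, t) := c in
  rcons [seq (((nth 0%N sz i)%:R - a) / (n%:R + th), (incr_nth sz i, rcons t i))
        | i <- iota 0 (size sz)]
        ((th + (size sz)%:R * a) / (n%:R + th), (rcons sz 1%N, rcons t (size sz))).

Definition code1 (n : nat) (s : seq (seq nat)) : seq nat * seq nat :=
  (map size s, map (crp_blk s) (iota 1 n)).

Definition CInv (n : nat) (s : seq (seq nat)) : bool :=
  all (all (fun x => x <= n)%N) s && all (fun j => crp_blk s j < size s)%N (iota 1 n).

Lemma iotaSr1 n : iota 1 n.+1 = rcons (iota 1 n) n.+1.
Proof. by rewrite -cats1 -(addn1 n) iotaD add1n addn1. Qed.

Lemma find_set_nth (T : Type) (p : pred T) (x0 : T) s i y :
  (i < size s)%N -> p y = p (nth x0 s i) -> find p (set_nth x0 s i y) = find p s.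
Proof.
move=> ilt py.
rewrite set_nthE ilt.
rewrite -{3}(cat_take_drop i s) (drop_nth x0 ilt) !find_cat /=.
by rewrite py.
Qed.

Lemma crp_distS (R : realFieldType) (a th : R) n : (0 < n)%N ->
  crp_dist a th n.+1 = flatten (map (crp_step a th n) (crp_dist a th n)).
Proof. by case: n. Qed.

Lemma CInv_notin n s : CInv n s -> ~~ has (fun b => n.+1 \in b) s.
Proof.
case/andP => /allP Hall _; apply/hasPn => b bs; apply/negP => /(allP (Hall b bs)).
by rewrite ltnn.
Qed.

Lemma crp_blk_set n s i j : CInv n s -> (i < size s)%N -> j != n.+1 ->
  crp_blk (set_nth [::] s i (rcons (nth [::] s i) n.+1)) j = crp_blk s j.
Proof.
by move=> _ ilt jne; rewrite /crp_blk find_set_nth // mem_rcons in_cons (negbTE jne).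
Qed.

Lemma crp_blk_set_new n s i : CInv n s -> (i < size s)%N ->
  crp_blk (set_nth [::] s i (rcons (nth [::] s i) n.+1)) n.+1 = i.
Proof.
move=> H ilt; rewrite /crp_blk set_nthE ilt find_cat.
have -> : has (fun b => n.+1 \in b) (take i s) = false.
  apply/negbTE/hasPn => b /mem_take bs.
  by move/hasPn: (CInv_notin H); apply.
by rewrite size_take ilt /= mem_rcons in_cons eqxx addn0.
Qed.

Lemma crp_blk_rcons_old n s j : CInv n s -> j \in iota 1 n ->
  crp_blk (rcons s [:: n.+1]) j = crp_blk s j.
Proof.
case/andP => _ /allP Hb jin; have := Hb j jin.
by rewrite /crp_blk -cats1 find_cat -has_find => ->.
Qed.

Lemma crp_blk_rcons_new n s : CInv n s -> crp_blk (rcons s [:: n.+1]) n.+1 = size s.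
Proof.
move=> H; rewrite /crp_blk -cats1 find_cat (negbTE (CInv_notin H)) /=.
by rewrite inE eqxx addn0.
Qed.

Lemma size_set_nth_lt (T : Type) (x0 : T) s i y : (i < size s)%N -> size (set_nth x0 s i y) = size s.
Proof. by move=> ilt; rewrite size_set_nth; apply/maxn_idPr. Qed.

Lemma CInv_step_set n s i : CInv n s -> (i < size s)%N ->
  CInv n.+1 (set_nth [::] s i (rcons (nth [::] s i) n.+1)).
Proof.
move=> H ilt; have H0 := H; case/andP: H => /allP Hall /allP Hb.
apply/andP; split.
  apply/allP => b; rewrite set_nthE ilt mem_cat in_cons => /or3P [/mem_take bs|/eqP->|/mem_drop bs].
  - by apply/allP => x /(allP (Hall b bs)) /leqW.
  - apply/allP => x; rewrite mem_rcons in_cons => /orP [/eqP -> //|xb].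
    by apply: leqW; apply: (allP (Hall _ (mem_nth [::] ilt))).
  - by apply/allP => x /(allP (Hall b bs)) /leqW.
apply/allP => j; rewrite iotaSr1 mem_rcons in_cons size_set_nth_lt // => /orP [/eqP->|jin].
  by rewrite crp_blk_set_new.
rewrite crp_blk_set ?Hb //.
by apply/negP => /eqP je; move: jin; rewrite je mem_iota ltnn andbF.
Qed.

Lemma CInv_step_new n s : CInv n s -> CInv n.+1 (rcons s [:: n.+1]).
Proof.
move=> H; have H0 := H; case/andP: H => /allP Hall /allP Hb.
apply/andP; split.
  apply/allP => b; rewrite mem_rcons in_cons => /orP [/eqP ->|bs].
    by rewrite /= leqnn.
  by apply/allP => x /(allP (Hall b bs)) /leqW.
apply/allP => j; rewrite iotaSr1 mem_rcons in_cons size_rcons => /orP [/eqP->|jin].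
  by rewrite crp_blk_rcons_new.
by rewrite crp_blk_rcons_old // ltnS ltnW // Hb.
Qed.

Lemma code1_set n s i : CInv n s -> (i < size s)%N ->
  code1 n.+1 (set_nth [::] s i (rcons (nth [::] s i) n.+1))
  = (incr_nth (map size s) i, rcons (map (crp_blk s) (iota 1 n)) i).
Proof.
move=> H ilt; rewrite /code1; congr (_, _).
  apply: (@eq_from_nth _ 0%N).
    by rewrite size_map size_incr_nth size_map ilt size_set_nth_lt.
  move=> k; rewrite size_map size_set_nth_lt // => klt.
  rewrite (nth_map [::]) ?size_set_nth_lt // nth_set_nth /= nth_incr_nth (nth_map [::]) //.
  by rewrite eq_sym; case: eqP => [->|]; rewrite ?size_rcons.
rewrite iotaSr1 map_rcons crp_blk_set_new //; congr rcons.
apply/eq_in_map => j jin; rewrite crp_blk_set //.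
by apply/negP => /eqP je; move: jin; rewrite je mem_iota ltnn andbF.
Qed.

Lemma code1_new n s : CInv n s ->
  code1 n.+1 (rcons s [:: n.+1])
  = (rcons (map size s) 1%N, rcons (map (crp_blk s) (iota 1 n)) (size s)).
Proof.
move=> H; rewrite /code1 map_rcons; congr (_, _).
rewrite iotaSr1 map_rcons crp_blk_rcons_new //; congr rcons.
by apply/eq_in_map => j jin; rewrite crp_blk_rcons_old.
Qed.

Lemma crp_compat (R : realFieldType) (a th : R) n x : CInv n x.2 -> forall c,
  wprob (crp_step a th n x) (fun y => code1 n.+1 y == c)
  = x.1 * wprob (kern a th n (code1 n x.2)) (fun y => y == c).
Proof.
case: x => w s /= H c.
rewrite /crp_step /kern /code1 /= !wprob_rcons !wprob_map mulrDr mulr_sumr.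
rewrite -/(code1 n.+1 (rcons s [:: n.+1])) code1_new // size_map.
congr (_ + _); last by rewrite /= (fun_if (fun y => w * y)) mulr0.
apply: eq_big_seq => i; rewrite mem_iota add0n => /andP [_ ilt] /=.
rewrite -/(code1 n.+1 _) code1_set // (nth_map [::]) //.
by rewrite (fun_if (fun y => w * y)) mulr0.
Qed.

Lemma crp_inv (R : realFieldType) (a th : R) n : (0 < n)%N ->
  forall x, x \in crp_dist a th n -> CInv n x.2.
Proof.
elim: n => // n IH _ x.
case: n IH => [_|n IH].
  by rewrite /= inE => /eqP -> /=.
rewrite crp_distS // => /flattenP [l /mapP [[w s] sD ->]] xl.
have Hs := IH isT _ sD; rewrite /= in Hs.
move: xl; rewrite /crp_step mem_rcons in_cons => /orP [/eqP -> /=|].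
  exact: CInv_step_new.
move=> /mapP [i]; rewrite mem_iota add0n => /andP [_ ilt] -> /=.
exact: CInv_step_set.
Qed.

Definition valid (par : seq nat) := forall k, (k < size par)%N -> (nth 0%N par k <= k)%N.

Lemma TA1 par : valid par -> forall f g j, (0 < j)%N -> (j <= size par)%N ->
  (j <= f)%N -> (j <= g)%N -> top_anc f par j = top_anc g par j.
Proof.
move=> V; elim=> [|f IH] [|g] j j0 js jf jg; try lia.
rewrite /=; case: ifP => // p0; apply: IH; move/negbT: p0; rewrite -lt0n => p0 //;
have := V j.-1; lia.
Qed.

Lemma TA2 par : valid par -> forall f j, (0 < j)%N -> (j <= size par)%N -> (j <= f)%N ->
  [/\ (0 < top_anc f par j)%N, (top_anc f par j <= j)%N & nth 0%N par (top_anc f par j).-1 = 0%N].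
Proof.
move=> V; elim=> [|f IH] j j0 js jf; first lia.
rewrite /=; case: ifP => [/eqP -> //|p0].
move/negbT: p0; rewrite -lt0n => p0.
have Vj := V j.-1.
have [] := IH (nth 0%N par j.-1) p0; try lia.
move=> h1 h2 h3; split => //; lia.
Qed.

Lemma TA3 par v : valid par -> forall f j, (0 < j)%N -> (j <= size par)%N ->
  top_anc f (rcons par v) j = top_anc f par j.
Proof.
move=> V; elim=> [|f IH] j j0 js //=.
have jl : (j.-1 < size par)%N by lia.
rewrite nth_rcons jl; case: ifP => // p0; apply: IH.
  by move/negbT: p0; rewrite -lt0n.
have := V j.-1; lia.
Qed.

Lemma BR_old par v j : valid par -> (0 < j)%N -> (j <= size par)%N ->
  branch_of (rcons par v) j = branch_of par j.
Proof. by move=> V j0 js; rewrite /branch_of TA3. Qed.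

Lemma BR_new par v : valid par -> (v <= size par)%N ->
  branch_of (rcons par v) (size par).+1 = if v == 0%N then (size par).+1 else branch_of par v.
Proof.
move=> V vs; rewrite /branch_of /= nth_rcons ltnn eqxx.
case: eqP => // /eqP v0.
rewrite TA3 ?lt0n //; apply: TA1; rewrite ?lt0n //; lia.
Qed.

Lemma BR_prop par j : valid par -> (0 < j)%N -> (j <= size par)%N ->
  [/\ (0 < branch_of par j)%N, (branch_of par j <= j)%N & nth 0%N par (branch_of par j).-1 = 0%N].
Proof. by move=> V j0 js; apply: TA2. Qed.

Definition idx (par : seq nat) (j : nat) : nat := count_mem 0%N (take (branch_of par j).-1 par).
Definition nb (par : seq nat) : nat := count_mem 0%N par.

Lemma idx_old par v j : valid par -> (0 < j)%N -> (j <= size par)%N ->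
  idx (rcons par v) j = idx par j.
Proof.
move=> V j0 js; rewrite /idx BR_old // -cats1 takel_cat //.
have [] := BR_prop V j0 js; lia.
Qed.

Lemma idx_new par v : valid par -> (v <= size par)%N ->
  idx (rcons par v) (size par).+1 = if v == 0%N then nb par else idx par v.
Proof.
move=> V vs; rewrite /idx BR_new //; case: eqP => [_|/eqP v0].
  by rewrite /= -cats1 take_size_cat.
rewrite -cats1 takel_cat //.
have [] := BR_prop V (j := v) _ vs; first by rewrite lt0n.
lia.
Qed.

Lemma nb_rcons par v : nb (rcons par v) = (nb par + (v == 0%N))%N.
Proof. by rewrite /nb -cats1 count_cat /= addn0 eq_sym. Qed.

Lemma count_mem_rcons (t : seq nat) c i : count_mem i (rcons t c) = (count_mem i t + (c == i))%N.
Proof. by rewrite -cats1 count_cat /= addn0. Qed.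

Lemma outdeg_rcons par v u : outdeg (rcons par v) u = (outdeg par u + (v == u))%N.
Proof. exact: count_mem_rcons. Qed.

Lemma outdeg_last par v : valid par -> (v <= size par)%N ->
  outdeg (rcons par v) (size par).+1 = 0%N.
Proof.
move=> V vs; apply/count_memPn; rewrite mem_rcons in_cons negb_or; apply/andP; split.
  by apply/negP => /eqP e; lia.
apply/negP => /(nthP 0%N) [k ks e]; have := V k ks; rewrite e; by rewrite ltnNge (ltnW ks).
Qed.

Definition code2 (n : nat) (par : seq nat) : seq nat * seq nat :=
  (mkseq (fun i => count_mem i (map (idx par) (iota 1 n))) (nb par), map (idx par) (iota 1 n)).

Definition TInv (n : nat) (par : seq nat) : Prop :=
  [/\ size par = n, valid par,
      (forall j, (0 < j)%N -> (j <= n)%N -> (idx par j < nb par)%N) &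
      (forall i, (i < nb par)%N ->
         (\sum_(v <- iota 1 n | idx par v == i) outdeg par v).+1
         = count_mem i (map (idx par) (iota 1 n)))].

Lemma valid_rcons par v : valid par -> (v <= size par)%N -> valid (rcons par v).
Proof.
move=> V vs k; rewrite size_rcons ltnS nth_rcons leq_eqVlt => /orP [/eqP ->|kl].
  by rewrite ltnn eqxx.
by rewrite kl; apply: V.
Qed.

Lemma map_idx_step n par v : TInv n par -> (v <= n)%N ->
  map (idx (rcons par v)) (iota 1 n.+1)
  = rcons (map (idx par) (iota 1 n)) (if v == 0%N then nb par else idx par v).
Proof.
case=> sz V _ _ vn.
rewrite iotaSr1 map_rcons.
have -> : idx (rcons par v) n.+1 = (if v == 0%N then nb par else idx par v).
  by rewrite -sz idx_new // sz.
congr rcons.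
apply/eq_in_map => j; rewrite mem_iota => /andP [j0 jn].
by rewrite idx_old // sz; lia.
Qed.

Lemma sum_ind (r : seq nat) (P : pred nat) v :
  uniq r ->
  (\sum_(u <- r | P u) (v == u : nat))%N = (P v && (v \in r) : nat).
Proof.
move=> ur; rewrite big_mkcond /=.
case vr: (v \in r); last first.
  rewrite andbF big1_seq // => u /andP [_ ur']; case: ifP => // _.
  by case: eqP => // e; move: vr; rewrite e ur'.
rewrite (bigD1_seq v) //= eqxx big1 ?andbT ?addn0 => [|u /negbTE].
  by case: (P v).
by rewrite eq_sym => ->; case: ifP.
Qed.

Lemma TInv_step n par v : TInv n par -> (v <= n)%N -> TInv n.+1 (rcons par v).
Proof.
move=> H vn; have H0 := H; case: H => sz V Hi Hs.
have vs : (v <= size par)%N by rewrite sz.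
split.
- by rewrite size_rcons sz.
- exact: valid_rcons.
- move=> j j0; rewrite nb_rcons leq_eqVlt => /orP [/eqP ->|jn].
    have -> : idx (rcons par v) n.+1 = (if v == 0%N then nb par else idx par v).
      by rewrite -sz idx_new.
    case: eqP => [_|/eqP v0]; first lia.
    have := Hi v; rewrite lt0n v0 => /(_ isT vn); lia.
  rewrite idx_old ?sz //; have := Hi j j0 jn; lia.
move=> i; rewrite map_idx_step // count_mem_rcons nb_rcons => ilt.
have od : outdeg (rcons par v) n.+1 = 0%N by rewrite -sz outdeg_last.
rewrite iotaSr1 -cats1 big_cat /= big_cons big_nil od.
have -> : (\sum_(u <- iota 1 n | idx (rcons par v) u == i) outdeg (rcons par v) u
           = \sum_(u <- iota 1 n | idx par u == i) (outdeg par u + (v == u)))%N.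
  rewrite big_seq_cond [RHS]big_seq_cond; apply: eq_big => u.
    rewrite mem_iota; case: (boolP (0 < u < 1 + n)%N) => //= /andP [u0 un].
    by rewrite idx_old // sz; lia.
  by rewrite outdeg_rcons.
rewrite big_split /= sum_ind ?iota_uniq // mem_iota.
have -> : forall b : bool, (if b then (0 + 0)%N else 0%N) = 0%N by case.
rewrite addn0.
case: (eqVneq v 0%N) => [v0|v0].
  subst v; rewrite /= andbF addn0.
  case: (ltnP i (nb par)) => [il|ige].
    have -> : (nb par == i) = false by apply/negbTE; rewrite neq_ltn il orbT.
    by rewrite addn0 -Hs.
  have ie : i = nb par by move: ilt; rewrite eqxx addn1 ltnS => ile; apply/eqP; rewrite eqn_leq ile ige.
  subst i; rewrite eqxx big1_seq; last first.
    move=> u /andP [/eqP iu]; rewrite mem_iota => /andP [u0 un].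
    by have := Hi u u0; rewrite iu ltnn => h; have /h : (u <= n)%N by lia.
  have -> : count_mem (nb par) (map (idx par) (iota 1 n)) = 0%N.
    apply/count_memPn/mapP => [[u]]; rewrite mem_iota => /andP [u0 un] e.
    by have := Hi u u0; rewrite -e ltnn => h; have /h : (u <= n)%N by lia.
  by [].
have il : (i < nb par)%N by move: ilt; rewrite (negbTE v0) addn0.
rewrite -Hs //.
have -> : (0 < v)%N by rewrite lt0n.
have -> : (v < 1 + n)%N by rewrite add1n ltnS.
by case: (idx par v == i); rewrite /= ?addn0 ?addn1 ?addnS.
Qed.

Lemma cnt_nb0 n par : TInv n par -> count_mem (nb par) (map (idx par) (iota 1 n)) = 0%N.
Proof.
case=> _ _ Hi _.
apply/count_memPn/mapP => [[u]]; rewrite mem_iota => /andP [u0 un] e.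
by have := Hi u u0; rewrite -e ltnn => h; have /h : (u <= n)%N by lia.
Qed.

Lemma idx_lt n par v : TInv n par -> (0 < v)%N -> (v <= n)%N -> (idx par v < nb par)%N.
Proof. by case=> _ _ Hi _; apply: Hi. Qed.

Lemma code2_step n par v : TInv n par -> (v <= n)%N ->
  code2 n.+1 (rcons par v) =
  if v == 0%N then
    (rcons (mkseq (fun i => count_mem i (map (idx par) (iota 1 n))) (nb par)) 1%N,
     rcons (map (idx par) (iota 1 n)) (nb par))
  else
    (incr_nth (mkseq (fun i => count_mem i (map (idx par) (iota 1 n))) (nb par)) (idx par v),
     rcons (map (idx par) (iota 1 n)) (idx par v)).
Proof.
move=> H vn; rewrite /code2 map_idx_step // nb_rcons.
case: (eqVneq v 0%N) => [v0|v0] /=; first subst v.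
  rewrite addn1 mkseqS count_mem_rcons eqxx (cnt_nb0 H) /=; congr (_, _); congr rcons.
  rewrite /mkseq; apply/eq_in_map => i; rewrite mem_iota add0n => /andP [_ il].
  rewrite count_mem_rcons.
  have -> : (nb par == i) = false by apply/negbTE; rewrite neq_ltn il orbT.
  by rewrite addn0.
rewrite addn0; congr (_, _).
have il := idx_lt H (v := v); rewrite lt0n v0 in il; have {}il := il isT vn.
apply: (@eq_from_nth _ 0%N).
  by rewrite size_incr_nth !size_mkseq il.
move=> k; rewrite size_mkseq => kl.
by rewrite nth_incr_nth !nth_mkseq // count_mem_rcons addnC.
Qed.

Lemma tree_inv (R : realFieldType) (alpha beta : R) n :
  forall x, x \in tree_dist alpha beta n -> TInv n x.2.
Proof.
elim: n => [x|n IH x].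
  rewrite /= inE => /eqP -> /=; split => //.
  by move=> j j0 jn; move: (leq_trans j0 jn).
rewrite /= => /flatten_mapP [[w par] pD] xl.
have Hp := IH _ pD; rewrite /= in Hp.
move: xl => /mapP [v]; rewrite mem_iota add0n => /andP [_ vn] -> /=.
by apply: TInv_step; rewrite // -ltnS.
Qed.

Lemma tree_compat (R : realFieldType) (alpha beta : R) n x :
  0 < alpha -> 0 < beta -> TInv n x.2 -> forall c,
  wprob (tree_step alpha beta n x) (fun y => code2 n.+1 y == c)
  = x.1 * wprob (kern (1 + alpha)^-1 (beta / (1 + alpha)) n (code2 n x.2)) (fun y => y == c).
Proof.
case: x => w par ha hb H c; rewrite /= in H.
change (wprob (tree_step alpha beta n (w, par)) (fun y => code2 n.+1 y == c)
  = w * wprob (kern (1 + alpha)^-1 (beta / (1 + alpha)) n (code2 n par)) (fun y => y == c)).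
have n0 := ler0n R n.
have h1 : 1 + alpha != 0 by lra.
have h1p : 0 < 1 + alpha by lra.
have hth : 0 < beta / (1 + alpha) by apply: divr_gt0.
have h2 : beta + (alpha + 1) * n%:R != 0.
  have : 0 <= (alpha + 1) * n%:R by apply: mulr_ge0; lra.
  lra.
have h3 : n%:R + beta / (1 + alpha) != 0 by lra.
set t := map (idx par) (iota 1 n).
set sz := mkseq (fun i => count_mem i t) (nb par).
have Hsz : size sz = nb par by rewrite size_mkseq.
set D := beta + (alpha + 1) * n%:R.
have -> : tree_step alpha beta n (w, par) =
  [seq (w * (node_weight alpha beta par v / D), rcons par v) | v <- iota 0 n.+1] by [].
rewrite wprob_map.
rewrite (eq_big_seq (fun v => if (if v == 0%N then (rcons sz 1%N, rcons t (nb par))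
     else (incr_nth sz (idx par v), rcons t (idx par v))) == c
     then w * (node_weight alpha beta par v / D) else 0)); last first.
  move=> v; rewrite mem_iota add0n => /andP [_ vn] /=.
  by rewrite code2_step // -ltnS.
rewrite (_ : iota 0 n.+1 = 0%N :: iota 1 n) // big_cons eqxx.
rewrite (eq_big_seq (fun v => if (incr_nth sz (idx par v), rcons t (idx par v)) == c
     then w * (((outdeg par v)%:R + alpha) / D) else 0)); last first.
  move=> v; rewrite mem_iota => /andP [v0 _].
  have v0' : (v == 0%N) = false by apply/negbTE; rewrite -lt0n.
  by rewrite /node_weight v0'.
have -> : code2 n par = (sz, t) by [].
rewrite /kern wprob_rcons wprob_map Hsz /=.
rewrite mulrDr addrC; congr (_ + _); last first.
  case: ifP => _; last by rewrite mulr0.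
  rewrite /node_weight eqxx /outdeg -/(nb par) /D.
  congr (_ * _); field; lra.
rewrite mulr_sumr.
transitivity (\sum_(v <- iota 1 n) \sum_(i <- iota 0 (nb par))
   (if idx par v == i then (if (incr_nth sz (idx par v), rcons t (idx par v)) == c
     then w * (((outdeg par v)%:R + alpha) / D) else 0) else 0)).
  apply: eq_big_seq => v; rewrite mem_iota => /andP [v0 vn].
  have il : (idx par v < nb par)%N by apply: (idx_lt H); lia.
  rewrite (bigD1_seq (idx par v)) ?iota_uniq ?mem_iota ?add0n //= eqxx.
  by rewrite big1 ?addr0 // => i /negbTE; rewrite eq_sym => ->.
rewrite exchange_big; apply: eq_big_seq => i; rewrite mem_iota add0n => /andP [_ il].
rewrite -big_mkcond /=.
rewrite (eq_bigr (fun v => if (incr_nth sz i, rcons t i) == c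
     then w * (((outdeg par v)%:R + alpha) / D) else 0)); last by move=> v /eqP ->.
case: ifP => _; last by rewrite big1 // mulr0.
rewrite -mulr_sumr -mulr_suml big_split /= -natr_sum big_const_seq iter_addr_0.
rewrite nth_mkseq //.
have cnt : count_mem i t = count (fun v => idx par v == i) (iota 1 n) by rewrite count_map.
case: H => _ _ _ Hs.
rewrite -cnt -(Hs i il).
set so := (\sum_(_ <- _ | _) _)%N.
rewrite -mulr_natr -addn1 natrD /D.
congr (_ * _); field; lra.
Qed.

Lemma base_eq (R : realFieldType) (alpha beta : R) : 0 < alpha -> 0 < beta -> forall c,
  wprob (crp_dist (1 + alpha)^-1 (beta / (1 + alpha)) 1) (fun y => code1 1 y == c)
  = wprob (tree_dist alpha beta 1) (fun y => code2 1 y == c).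
Proof.
move=> ha hb c.
have -> : crp_dist (1 + alpha)^-1 (beta / (1 + alpha)) 1 = [:: (1, [:: [:: 1%N]])] by [].
have -> : tree_dist alpha beta 1 =
  [:: (1 * (node_weight alpha beta [::] 0 / (beta + (alpha + 1) * 0%:R)), [:: 0%N])] by [].
have e1 : code1 1 [:: [:: 1%N]] = ([:: 1%N], [:: 0%N]) by [].
have e2 : code2 1 [:: 0%N] = ([:: 1%N], [:: 0%N]) by [].
rewrite /wprob !big_cons !big_nil; rewrite [(_, _).2]/= [(_,_).1]/= e1 e2 /node_weight /outdeg /=.
by rewrite mul1r mulr0 add0r !addr0 divff ?gt_eqF.
Qed.

Definition part_of (n : nat) (t : seq nat) : {set {set 'I_n}} :=
  [set [set i : 'I_n | nth 0%N t i == nth 0%N t j] | j : 'I_n].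

Lemma crp_part_code n s : crp_part n s = part_of n (code1 n s).2.
Proof.
rewrite /crp_part /part_of /code1 /=.
apply: eq_imset => j; apply/setP => i.
by rewrite !inE !(nth_map 0%N) ?size_iota // !nth_iota // add1n.
Qed.

Lemma cnt_take_lt par k l : nth 0%N par k = 0%N -> (k < l)%N -> (l <= size par)%N ->
  (count_mem 0%N (take k par) < count_mem 0%N (take l par))%N.
Proof.
move=> e kl ls.
have -> : l = (k.+1 + (l - k.+1))%N by rewrite subnKC.
rewrite takeD count_cat (take_nth 0%N) ?count_mem_rcons ?e; last by apply: leq_trans ls.
rewrite eqxx; lia.
Qed.

Lemma idx_eq par j1 j2 : valid par -> (0 < j1)%N -> (j1 <= size par)%N ->
  (0 < j2)%N -> (j2 <= size par)%N ->
  (idx par j1 == idx par j2) = (branch_of par j1 == branch_of par j2).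
Proof.
move=> V j10 j1s j20 j2s.
have [p1 q1 r1] := BR_prop V j10 j1s.
have [p2 q2 r2] := BR_prop V j20 j2s.
rewrite /idx; case: (ltngtP (branch_of par j1) (branch_of par j2)) => [lt|gt|->]; last by rewrite !eqxx.
- apply/negbTE; rewrite neq_ltn; apply/orP; left.
  apply: cnt_take_lt => //; lia.
- apply/negbTE; rewrite neq_ltn; apply/orP; right.
  apply: cnt_take_lt => //; lia.
Qed.

Lemma tree_part_code n par : TInv n par -> tree_part n par = part_of n (code2 n par).2.
Proof.
case=> sz V _ _.
rewrite /tree_part /part_of /code2 /=.
apply: eq_imset => j; apply/setP => i.
rewrite !inE !(nth_map 0%N) ?size_iota // !nth_iota // add1n idx_eq // sz //.
Qed.

Unset Implicit Arguments.
Set Strict Implicit.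

Theorem proposition3 (R : realFieldType) (alpha beta : R) :
  0 < alpha -> 0 < beta ->
  forall (n : nat), (0 < n)%N ->
  forall P : {set {set 'I_n}},
    wprob (crp_dist (1 + alpha)^-1 (beta / (1 + alpha)) n)
          (fun s => crp_part n s == P)
    = wprob (tree_dist alpha beta n) (fun par => tree_part n par == P).
Proof.
move=> ha hb n n0 P.
have main : forall m, (0 < m)%N -> forall c,
    wprob (crp_dist (1 + alpha)^-1 (beta / (1 + alpha)) m) (fun y => code1 m y == c)
    = wprob (tree_dist alpha beta m) (fun y => code2 m y == c).
  apply: (@chain_eq R _ _ _ _ _ (crp_step (1 + alpha)^-1 (beta / (1 + alpha)))
             (tree_step alpha beta) code1 code2 (kern (1 + alpha)^-1 (beta / (1 + alpha)))).
  - by move=> m m0; apply: crp_distS.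
  - by [].
  - by move=> m x m0 xD c; apply: crp_compat; apply: (crp_inv m0 xD).
  - by move=> m x m0 xD c; apply: tree_compat => //; apply: (tree_inv xD).
  - exact: base_eq.
transitivity (wprob (crp_dist (1 + alpha)^-1 (beta / (1 + alpha)) n)
                    (fun y => (fun c : seq nat * seq nat => part_of n c.2 == P) (code1 n y))).
  by rewrite /wprob; apply: eq_bigr => x _; rewrite crp_part_code.
rewrite (push_pred (main n n0) (fun c : seq nat * seq nat => part_of n c.2 == P)).
by rewrite /wprob; apply: eq_big_seq => x xD; rewrite tree_part_code //; apply: (tree_inv xD).
Qed.
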